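(* The images of the forkless monomials $\mathfrak{m}\in\mathfrak{M}$ under the projection $\mathcal{X}\to\mathcal{X}/\mathcal{J}$ form a basis of the $\mathbf{k}$-module $\mathcal{X}/\mathcal{J}$.
   Context: Let $\mathbf{k}$ be a commutative ring, let $\beta,\alpha\in\mathbf{k}$, and let $n$ be a positive integer. Let $\mathcal{X}=\mathbf{k}[x_{i,j}\mid 1\le i<j\le n]$ be the polynomial ring over $\mathbf{k}$ in the indeterminates $x_{i,j}$, and $\mathfrak{M}$ the set of monomials in them. Let $\mathcal{J}$ be the ideal of $\mathcal{X}$ generated by all elements $x_{i,j}x_{j,k}-x_{i,k}(x_{i,j}+x_{j,k}+\beta)-\alpha$ for $1\le i<j<k\le n$. A monomial $\mathfrak{m}\in\mathfrak{M}$ is forkless if there is no triple $1\le i<j<k\le n$ with $x_{i,j}x_{i,k}\mid\mathfrak{m}$. *)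

(* Defs.v *)
From HB Require Import structures.
From mathcomp Require Import all_boot all_order all_algebra.
Set Implicit Arguments. Unset Strict Implicit. Unset Printing Implicit Defensive.
Import GRing.Theory.
Local Open Scope ring_scope.

(* indeterminates x_{i,j}, 1 <= i < j <= n (0-based here) *)
Definition var (n : nat) := {p : 'I_n * 'I_n | (p.1 < p.2)%N}.

Definition mono (n : nat) := {ffun var n -> nat}.

Definition mmul n (a b : mono n) : mono n := [ffun v => (a v + b v)%N].
Definition mone n : mono n := [ffun _ => 0%N].
(* the monomial x_{i,j} (only used for i < j) *)
Definition mx n (i j : 'I_n) : mono n := [ffun v : var n => nat_of_bool (val v == (i, j))].
Definition mdvd n (a b : mono n) : bool := [forall v, (a v <= b v)%N].

Definition forkless n (m : mono n) : Prop :=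
  forall i j k : 'I_n, (i < j)%N -> (j < k)%N -> ~~ mdvd (mmul (mx i j) (mx i k)) m.

(* polynomials over R: formal finite sums of terms c * m;
   two such represent the same polynomial iff they have the same coefficients *)
Definition xpoly (R : comPzRingType) n := seq (R * mono n).
Definition coef (R : comPzRingType) n (p : xpoly R n) (m : mono n) : R :=
  \sum_(t <- p | t.2 == m) t.1.
Definition padd (R : comPzRingType) n (p q : xpoly R n) : xpoly R n := p ++ q.
Definition popp (R : comPzRingType) n (p : xpoly R n) : xpoly R n :=
  [seq (- t.1, t.2) | t <- p].
Definition pmul (R : comPzRingType) n (p q : xpoly R n) : xpoly R n :=
  [seq (a.1 * b.1, mmul a.2 b.2) | a <- p, b <- q].

Definition gen (R : comPzRingType) n (beta alpha : R) (i j k : 'I_n) : xpoly R n :=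
  [:: (1, mmul (mx i j) (mx j k));
      (-1, mmul (mx i k) (mx i j));
      (-1, mmul (mx i k) (mx j k));
      (- beta, mx i k);
      (- alpha, mone n)].

Definition inJ (R : comPzRingType) n (beta alpha : R) (p : xpoly R n) : Prop :=
  exists s : seq (xpoly R n * ('I_n * 'I_n * 'I_n)),
    all (fun t : xpoly R n * ('I_n * 'I_n * 'I_n) => (t.2.1.1 < t.2.1.2)%N && (t.2.1.2 < t.2.2)%N) s /\
    coef p =1 coef (flatten [seq pmul t.1 (gen beta alpha t.2.1.1 t.2.1.2 t.2.2) | t : xpoly R n * ('I_n * 'I_n * 'I_n) <- s]).

(* Main.v *)
Require Import Defs.
From HB Require Import structures.
From mathcomp Require Import all_boot all_order all_algebra.
From mathcomp Require Import zify ring.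
Import GRing.Theory.
Local Open Scope ring_scope.

Module Aux.
Set Implicit Arguments. Unset Strict Implicit. Unset Printing Implicit Defensive.

Section Mono.
Variable n : nat.
Implicit Types (a b m u z : mono n) (i j k : 'I_n).

Definition msub a b : mono n := [ffun v => (a v - b v)%N].
Definition wt (v : var n) : nat := (n - (val v).1)%N.
Definition W m : nat := (\sum_(v : var n) m v * wt v)%N.

Lemma mmulA a b c : mmul a (mmul b c) = mmul (mmul a b) c.
Proof. by apply/ffunP=> v; rewrite !ffunE addnA. Qed.
Lemma mmulC a b : mmul a b = mmul b a.
Proof. by apply/ffunP=> v; rewrite !ffunE addnC. Qed.
Lemma mmulAC z a b : mmul (mmul z a) b = mmul (mmul z b) a.
Proof. by apply/ffunP=> v; rewrite !ffunE; lia. Qed.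
Lemma mmul1 a : mmul a (mone n) = a.
Proof. by apply/ffunP=> v; rewrite !ffunE addn0. Qed.

Lemma mdvdP a b : reflect (forall v, a v <= b v)%N (mdvd a b).
Proof. exact: forallP. Qed.

Lemma msubK a b : mdvd a b -> mmul (msub b a) a = b.
Proof. move/mdvdP=> h; apply/ffunP=> v; rewrite !ffunE subnK //. Qed.
Lemma mmulK a b : msub (mmul b a) a = b.
Proof. by apply/ffunP=> v; rewrite !ffunE addnK. Qed.
Lemma mdvd_mull a b : mdvd a (mmul b a).
Proof. by apply/mdvdP=> v; rewrite ffunE leq_addl. Qed.

Lemma W_mmul a b : W (mmul a b) = (W a + W b)%N.
Proof. rewrite /W -big_split /=; apply: eq_bigr => v _; rewrite ffunE mulnDl //. Qed.
Lemma W_mone : W (mone n) = 0%N.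
Proof. by rewrite /W big1 // => v _; rewrite ffunE. Qed.

Lemma W_mx i j : (i < j)%N -> W (mx i j) = (n - i)%N.
Proof.
move=> hij; pose v0 : var n := exist _ (i, j) hij.
rewrite /W (bigD1 v0) //= big1 ?addn0.
  by rewrite ffunE eqxx mul1n /wt.
move=> v hv; rewrite ffunE; case: eqP => // e; exfalso; move/eqP: hv; apply.
by apply: val_inj; rewrite e.
Qed.

Lemma mx_le1 i j v : (mx i j v <= 1)%N.
Proof. by rewrite ffunE; case: eqP. Qed.
Lemma mx_disj i j i' j' v : (i, j) <> (i', j') -> (mx i j v + mx i' j' v <= 1)%N.
Proof. by move=> ne; rewrite !ffunE; case: eqP => [->|]; case: eqP. Qed.
End Mono.

Section Alg.
Variables (R : comPzRingType) (beta alpha : R) (n : nat).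
Implicit Types (a b m u z x : mono n) (i j k : 'I_n) (p q : xpoly R n).

Definition fork := ('I_n * 'I_n * 'I_n)%type.
Definition valid (f : fork) : bool := ((f.1.1 < f.1.2)%N && (f.1.2 < f.2)%N).
Definition Lf (f : fork) : mono n := mmul (mx f.1.1 f.2) (mx f.1.1 f.1.2).
Definition isfork (f : fork) m : bool := valid f && mdvd (Lf f) m.
Definition t1 (f : fork) := mmul (mx f.1.1 f.1.2) (mx f.1.2 f.2).
Definition t2 (f : fork) := mmul (mx f.1.1 f.2) (mx f.1.2 f.2).
Definition t3 (f : fork) := mx f.1.1 f.2.
Definition rterms (f : fork) u : xpoly R n :=
  [:: (1, mmul u (t1 f)); (-1, mmul u (t2 f)); (- beta, mmul u (t3 f)); (- alpha, u)].
Definition scale (c : R) p : xpoly R n := [seq (c * t.1, t.2) | t <- p].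

Fixpoint Nf (fuel : nat) m : xpoly R n :=
  if fuel is k'.+1 then
    if [pick f | isfork f m] is Some f then
      flatten [seq scale t.1 (Nf k' t.2) | t <- rterms f (msub m (Lf f))]
    else [:: (1, m)]
  else [::].

Lemma W_terms f : valid f -> 
  [/\ (W (t1 f) < W (Lf f))%N, (W (t2 f) < W (Lf f))%N & (W (t3 f) < W (Lf f))%N].
Proof.
case: f => [[i j] k] /andP [/= hij hjk].
have hik : (i < k)%N by lia.
rewrite /t1 /t2 /t3 /Lf /= !W_mmul !W_mx //.
have := ltn_ord k; have := ltn_ord j => *; split; lia.
Qed.

Lemma W_rterms f m t : isfork f m -> t \in rterms f (msub m (Lf f)) -> (W t.2 < W m)%N.
Proof.
case/andP=> hv hd; have [h1 h2 h3] := W_terms hv.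
have hm : W m = (W (msub m (Lf f)) + W (Lf f))%N by rewrite -W_mmul msubK.
have hL : (0 < W (Lf f))%N by lia.
rewrite !inE => /or4P [] /eqP -> /=; rewrite ?(W_mmul (msub _ _)); lia.
Qed.

Lemma Nf_S (k : nat) m : Nf k.+1 m =
    if [pick f | isfork f m] is Some f then
      flatten [seq scale t.1 (Nf k t.2) | t <- rterms f (msub m (Lf f))]
    else [:: (1, m)].
Proof. by []. Qed.

Lemma Nf_stable (k1 k2 : nat) m : (W m < k1)%N -> (W m < k2)%N -> Nf k1 m = Nf k2 m.
Proof.
elim: k1 k2 m => [|k1 IH] k2 m h1 h2; first by lia. case: k2 h2 => [|k2] h2; first by lia.
rewrite !Nf_S; case: pickP => [f hf|//]; congr flatten; apply/eq_in_map => t ht.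
have hw := W_rterms hf ht; congr scale; by apply: IH; [exact: leq_trans hw h1 | exact: leq_trans hw h2].
Qed.

Definition N m := Nf (W m).+1 m.

Lemma N_eq m : N m =
  if [pick f | isfork f m] is Some f then
      flatten [seq scale t.1 (N t.2) | t <- rterms f (msub m (Lf f))]
  else [:: (1, m)].
Proof.
rewrite /N Nf_S; case: pickP => [f hf|//]; congr flatten; apply/eq_in_map => t ht.
have hw := W_rterms hf ht; congr scale; by apply: Nf_stable.  
Qed.

Lemma cf_nil x : coef ([::] : xpoly R n) x = 0.
Proof. by rewrite /coef big_nil. Qed.
Lemma cf_cons t p x : coef (t :: p) x = (t.2 == x)%:R * t.1 + coef p x.
Proof. by rewrite /coef big_cons; case: eqP => _; rewrite ?mul1r ?mul0r ?add0r. Qed.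
Lemma cf_cat p q x : coef (p ++ q) x = coef p x + coef q x.
Proof. by rewrite /coef big_cat. Qed.
Lemma cf_scale c p x : coef (scale c p) x = c * coef p x.
Proof.
elim: p => [|t p IH]; first by rewrite /= !cf_nil mulr0.
by rewrite /= !cf_cons IH /=; ring.
Qed.
Lemma cf_popp p x : coef (popp p) x = - coef p x.
Proof.
elim: p => [|t p IH]; first by rewrite /= !cf_nil oppr0.
by rewrite /popp /= !cf_cons -/(popp p) IH /=; ring.
Qed.
Lemma cf_flatten (T : Type) (s : seq T) (G : T -> xpoly R n) x :
  coef (flatten [seq G t | t <- s]) x = \sum_(t <- s) coef (G t) x.
Proof.
elim: s => [|t s IH]; first by rewrite /= cf_nil big_nil.
by rewrite /= cf_cat IH big_cons.
Qed.
Lemma cf_sum p x : coef p x = \sum_(t <- p) (t.2 == x)%:R * t.1.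
Proof.
elim: p => [|t p IH]; first by rewrite cf_nil big_nil.
by rewrite cf_cons IH big_cons.
Qed.

Definition cN m x := coef (N m) x.

Definition Rf (f : fork) u x :=
  cN (mmul u (t1 f)) x - cN (mmul u (t2 f)) x - beta * cN (mmul u (t3 f)) x - alpha * cN u x.

Lemma cN_fork m g x : [pick f | isfork f m] = Some g -> cN m x = Rf g (msub m (Lf g)) x.
Proof.
move=> hp; rewrite /cN N_eq hp cf_flatten /= !big_cons big_nil /= !cf_scale /Rf /cN.
ring.
Qed.

Lemma cN_forkless m x : [pick f | isfork f m] = None -> cN m x = (m == x)%:R.
Proof. by move=> hp; rewrite /cN N_eq hp cf_cons cf_nil /=; ring. Qed.

Lemma pick_forkless m : forkless m <-> [pick f | isfork f m] = None.
Proof.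
split.
  move=> hf; case: pickP => // -[[i j] k] /andP [/andP [/= hij hjk] hd].
  by have := hf i j k hij hjk; rewrite /Lf /= mmulC in hd; rewrite hd.
move=> hp i j k hij hjk; apply/negP => hd.
move: hp; case: pickP => // /(_ (i, j, k)); rewrite /isfork /valid /Lf /= hij hjk mmulC hd.
by [].
Qed.

End Alg.

Section Key.
Variables (R : comPzRingType) (beta alpha : R) (n : nat).
Implicit Types (a b m u z x : mono n).

Local Notation cN := (cN beta alpha).
Local Notation Rf := (Rf beta alpha).

Ltac genb := repeat match goal with |- context [nat_of_bool ?e] =>
  let y := fresh "y" in generalize (nat_of_bool e) => y end.

Definition KeyP m0 := forall u (f : fork n) x, valid f -> (W (mmul u (Lf f)) < W m0)%N ->
  cN (mmul u (Lf f)) x = Rf f u x.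

Lemma disj m (f g : fork n) x : KeyP m -> valid f -> valid g ->
  mdvd (mmul (Lf f) (Lf g)) m -> Rf f (msub m (Lf f)) x = Rf g (msub m (Lf g)) x.
Proof.
move=> IH hf hg hd.
set z := msub m (mmul (Lf f) (Lf g)).
have hm : m = mmul (mmul z (Lf f)) (Lf g) by rewrite -mmulA msubK.
have e1 : msub m (Lf f) = mmul z (Lf g) by rewrite hm mmulAC mmulK.
have e2 : msub m (Lf g) = mmul z (Lf f) by rewrite hm mmulK.
have [a1 a2 a3] := W_terms hf; have [b1 b2 b3] := W_terms hg.
have IHg : forall t, (W t < W (Lf f))%N -> cN (mmul (mmul z (Lf g)) t) x = Rf g (mmul z t) x.
  move=> t ht; rewrite mmulAC; apply: IH => //; rewrite [in X in (_ < X)%N]hm !(W_mmul _ (Lf _)) ?(W_mmul z); lia.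
have IHf : forall t, (W t < W (Lf g))%N -> cN (mmul (mmul z (Lf f)) t) x = Rf f (mmul z t) x.
  move=> t ht; rewrite mmulAC; apply: IH => //; rewrite [in X in (_ < X)%N]hm !(W_mmul _ (Lf _)) ?(W_mmul z); lia.
have IHg0 : cN (mmul z (Lf g)) x = Rf g z x.
  apply: IH => //; rewrite [in X in (_ < X)%N]hm !(W_mmul _ (Lf _)) ?(W_mmul z); lia.
have IHf0 : cN (mmul z (Lf f)) x = Rf f z x.
  apply: IH => //; rewrite [in X in (_ < X)%N]hm !(W_mmul _ (Lf _)) ?(W_mmul z); lia.
rewrite e1 e2 /Rf !IHg // !IHf // IHg0 IHf0 /Rf.
rewrite !(mmulAC z (t1 g)) !(mmulAC z (t2 g)) !(mmulAC z (t3 g)).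
ring.
Qed.


Section Triple.
Variables (m x : mono n) (i a b c : 'I_n).
Hypotheses (hia : (i < a)%N) (hab : (a < b)%N) (hbc : (b < c)%N).
Hypothesis hd : forall v, (mx i a v + mx i b v + mx i c v <= m v)%N.
Hypothesis IH : KeyP m.

Let m' := msub m (mmul (mx i a) (mmul (mx i b) (mx i c))).
Definition mon (k1 k2 k3 k4 k5 k6 : nat) : mono n :=
  [ffun v => m' v + k1 * mx i a v + k2 * mx i b v + k3 * mx i c v
             + k4 * mx a b v + k5 * mx a c v + k6 * mx b c v]%N.

Lemma mon_A k1 k2 k3 k4 k5 k6 : mmul (mon k1 k2 k3 k4 k5 k6) (mx i a) = mon k1.+1 k2 k3 k4 k5 k6.
Proof. apply/ffunP=> v; rewrite !ffunE; lia. Qed.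
Lemma mon_B k1 k2 k3 k4 k5 k6 : mmul (mon k1 k2 k3 k4 k5 k6) (mx i b) = mon k1 k2.+1 k3 k4 k5 k6.
Proof. apply/ffunP=> v; rewrite !ffunE; lia. Qed.
Lemma mon_C k1 k2 k3 k4 k5 k6 : mmul (mon k1 k2 k3 k4 k5 k6) (mx i c) = mon k1 k2 k3.+1 k4 k5 k6.
Proof. apply/ffunP=> v; rewrite !ffunE; lia. Qed.
Lemma mon_P k1 k2 k3 k4 k5 k6 : mmul (mon k1 k2 k3 k4 k5 k6) (mx a b) = mon k1 k2 k3 k4.+1 k5 k6.
Proof. apply/ffunP=> v; rewrite !ffunE; lia. Qed.
Lemma mon_Q k1 k2 k3 k4 k5 k6 : mmul (mon k1 k2 k3 k4 k5 k6) (mx a c) = mon k1 k2 k3 k4 k5.+1 k6.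
Proof. apply/ffunP=> v; rewrite !ffunE; lia. Qed.
Lemma mon_S k1 k2 k3 k4 k5 k6 : mmul (mon k1 k2 k3 k4 k5 k6) (mx b c) = mon k1 k2 k3 k4 k5 k6.+1.
Proof. apply/ffunP=> v; rewrite !ffunE; lia. Qed.

Lemma m_eq : m = mon 1 1 1 0 0 0.
Proof. apply/ffunP=> v; have := hd v; rewrite /mon /m' !ffunE; genb; set t := m v; lia. Qed.

Lemma W_mon k1 k2 k3 k4 k5 k6 : W (mon k1 k2 k3 k4 k5 k6) =
  (W m' + k1 * (n - i) + k2 * (n - i) + k3 * (n - i) + k4 * (n - a) + k5 * (n - a) + k6 * (n - b))%N.
Proof.
have h1 := W_mx hia; have h2 := W_mx (ltn_trans hia hab).
have h3 := W_mx (ltn_trans hia (ltn_trans hab hbc)).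
have h4 := W_mx hab; have h5 := W_mx (ltn_trans hab hbc); have h6 := W_mx hbc.
rewrite /W in h1 h2 h3 h4 h5 h6 *.
rewrite (eq_bigr (fun v => m' v * wt v + k1 * (mx i a v * wt v) + k2 * (mx i b v * wt v)
  + k3 * (mx i c v * wt v) + k4 * (mx a b v * wt v) + k5 * (mx a c v * wt v)
  + k6 * (mx b c v * wt v))%N); last by move=> v _; rewrite [mon _ _ _ _ _ _ _]ffunE; ring.
by rewrite !big_split -!big_distrr /= h1 h2 h3 h4 h5 h6.
Qed.

Definition wc (k1 k2 k3 k4 k5 k6 : nat) :=
  ((k1 + k2 + k3) * (n - i) + (k4 + k5) * (n - a) + k6 * (n - b) < 3 * (n - i))%N.

Lemma wcW k1 k2 k3 k4 k5 k6 : wc k1 k2 k3 k4 k5 k6 -> (W (mon k1 k2 k3 k4 k5 k6) < W m)%N.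
Proof. rewrite /wc m_eq !W_mon; lia. Qed.

Lemma sAB k1 k2 k3 k4 k5 k6 : wc k1.+1 k2.+1 k3 k4 k5 k6 ->
  cN (mon k1.+1 k2.+1 k3 k4 k5 k6) x = cN (mon k1.+1 k2 k3 k4.+1 k5 k6) x
   - cN (mon k1 k2.+1 k3 k4.+1 k5 k6) x - beta * cN (mon k1 k2.+1 k3 k4 k5 k6) x
   - alpha * cN (mon k1 k2 k3 k4 k5 k6) x.
Proof.
move=> /wcW hw.
have e : mon k1.+1 k2.+1 k3 k4 k5 k6 = mmul (mon k1 k2 k3 k4 k5 k6) (Lf ((i, a), b)).
  by rewrite /Lf /= mmulA mon_B mon_A.
rewrite e IH -?e //; last by rewrite /valid /= hia hab.
by rewrite /Rf /t1 /t2 /t3 /= !mmulA ?mon_A ?mon_B ?mon_C ?mon_P ?mon_Q ?mon_S.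
Qed.

Lemma sAC k1 k2 k3 k4 k5 k6 : wc k1.+1 k2 k3.+1 k4 k5 k6 ->
  cN (mon k1.+1 k2 k3.+1 k4 k5 k6) x = cN (mon k1.+1 k2 k3 k4 k5.+1 k6) x
   - cN (mon k1 k2 k3.+1 k4 k5.+1 k6) x - beta * cN (mon k1 k2 k3.+1 k4 k5 k6) x
   - alpha * cN (mon k1 k2 k3 k4 k5 k6) x.
Proof.
move=> /wcW hw.
have e : mon k1.+1 k2 k3.+1 k4 k5 k6 = mmul (mon k1 k2 k3 k4 k5 k6) (Lf ((i, a), c)).
  by rewrite /Lf /= mmulA mon_C mon_A.
rewrite e IH -?e //; last by rewrite /valid /= hia (ltn_trans hab hbc).
by rewrite /Rf /t1 /t2 /t3 /= !mmulA ?mon_A ?mon_B ?mon_C ?mon_P ?mon_Q ?mon_S.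
Qed.

Lemma sBC k1 k2 k3 k4 k5 k6 : wc k1 k2.+1 k3.+1 k4 k5 k6 ->
  cN (mon k1 k2.+1 k3.+1 k4 k5 k6) x = cN (mon k1 k2.+1 k3 k4 k5 k6.+1) x
   - cN (mon k1 k2 k3.+1 k4 k5 k6.+1) x - beta * cN (mon k1 k2 k3.+1 k4 k5 k6) x
   - alpha * cN (mon k1 k2 k3 k4 k5 k6) x.
Proof.
move=> /wcW hw.
have e : mon k1 k2.+1 k3.+1 k4 k5 k6 = mmul (mon k1 k2 k3 k4 k5 k6) (Lf ((i, b), c)).
  by rewrite /Lf /= mmulA mon_C mon_B.
rewrite e IH -?e //; last by rewrite /valid /= (ltn_trans hia hab) hbc.
by rewrite /Rf /t1 /t2 /t3 /= !mmulA ?mon_A ?mon_B ?mon_C ?mon_P ?mon_Q ?mon_S.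
Qed.

Lemma sPQ k1 k2 k3 k4 k5 k6 : wc k1 k2 k3 k4.+1 k5.+1 k6 ->
  cN (mon k1 k2 k3 k4.+1 k5.+1 k6) x = cN (mon k1 k2 k3 k4.+1 k5 k6.+1) x
   - cN (mon k1 k2 k3 k4 k5.+1 k6.+1) x - beta * cN (mon k1 k2 k3 k4 k5.+1 k6) x
   - alpha * cN (mon k1 k2 k3 k4 k5 k6) x.
Proof.
move=> /wcW hw.
have e : mon k1 k2 k3 k4.+1 k5.+1 k6 = mmul (mon k1 k2 k3 k4 k5 k6) (Lf ((a, b), c)).
  by rewrite /Lf /= mmulA mon_Q mon_P.
rewrite e IH -?e //; last by rewrite /valid /= hab hbc.
by rewrite /Rf /t1 /t2 /t3 /= !mmulA ?mon_A ?mon_B ?mon_C ?mon_P ?mon_Q ?mon_S.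
Qed.

Ltac wcs := rewrite /wc; have := ltn_ord c; lia.

Lemma eAB : msub m (Lf ((i, a), b)) = mon 0 0 1 0 0 0.
Proof. by rewrite {1}m_eq /Lf /= -mon_A -mon_B -mmulA mmulK. Qed.
Lemma eAC : msub m (Lf ((i, a), c)) = mon 0 1 0 0 0 0.
Proof. by rewrite {1}m_eq /Lf /= -mon_A -mon_C -mmulA mmulK. Qed.
Lemma eBC : msub m (Lf ((i, b), c)) = mon 1 0 0 0 0 0.
Proof. by rewrite {1}m_eq /Lf /= -mon_B -mon_C -mmulA mmulK. Qed.

Lemma triple :
  Rf ((i, a), b) (msub m (Lf ((i, a), b))) x = Rf ((i, a), c) (msub m (Lf ((i, a), c))) x /\
   Rf ((i, a), c) (msub m (Lf ((i, a), c))) x = Rf ((i, b), c) (msub m (Lf ((i, b), c))) x.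
Proof.
rewrite eAB eAC eBC /Rf /t1 /t2 /t3 /= !mmulA ?mon_A ?mon_B ?mon_C ?mon_P ?mon_Q ?mon_S.
rewrite ?(@sAC 0%N 0%N 0%N 1%N 0%N 0%N ltac:(wcs)).
rewrite ?(@sBC 0%N 0%N 0%N 1%N 0%N 0%N ltac:(wcs)).
rewrite ?(@sAB 0%N 0%N 0%N 0%N 1%N 0%N ltac:(wcs)).
rewrite ?(@sBC 0%N 0%N 0%N 0%N 1%N 0%N ltac:(wcs)).
rewrite ?(@sAB 0%N 0%N 0%N 0%N 0%N 1%N ltac:(wcs)).
rewrite ?(@sAC 0%N 0%N 0%N 0%N 0%N 1%N ltac:(wcs)).
rewrite ?(@sBC 0%N 0%N 0%N 0%N 0%N 0%N ltac:(wcs)).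
rewrite ?(@sAC 0%N 0%N 0%N 0%N 0%N 0%N ltac:(wcs)).
rewrite ?(@sPQ 1%N 0%N 0%N 0%N 0%N 0%N ltac:(wcs)).
rewrite ?(@sPQ 0%N 0%N 1%N 0%N 0%N 0%N ltac:(wcs)).
rewrite ?(@sPQ 0%N 1%N 0%N 0%N 0%N 0%N ltac:(wcs)).

split; ring.
Qed.

End Triple.

Lemma neq_pair (i j k : 'I_n) : (j < k)%N -> (i, k) <> (i, j).
Proof. by move=> h [e]; move: h; rewrite e ltnn. Qed.
Lemma neq_pair' (i j k : 'I_n) : (j < k)%N -> (i, j) <> (i, k).
Proof. by move=> h [e]; move: h; rewrite e ltnn. Qed.

Ltac mvsolve := rewrite ?ffunE; genb; match goal with |- context [fun_of_fin ?m ?v] => set t := fun_of_fin m v end; lia.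

Lemma agree m x (f g : fork n) : KeyP m -> isfork f m -> isfork g m ->
  Rf f (msub m (Lf f)) x = Rf g (msub m (Lf g)) x.
Proof.
move=> IH; case: f => [[i j] k]; case: g => [[i' j'] k'].
move=> /andP[/andP[/= hij hjk] /mdvdP pf] /andP[/andP[/= hij' hjk'] /mdvdP pg].
have pf' : forall v, (mx i k v + mx i j v <= m v)%N by move=> v; have := pf v; rewrite ffunE.
have pg' : forall v, (mx i' k' v + mx i' j' v <= m v)%N by move=> v; have := pg v; rewrite ffunE.
clear pf pg.
have hv : valid ((i, j), k) by rewrite /valid /= hij hjk.
have hv' : valid ((i', j'), k') by rewrite /valid /= hij' hjk'.
case: (eqVneq (i, j) (i', j')) => [e1|d1].
  case: e1 => ? ?; subst i' j'.
  case: (ltngtP k k') => [hkk|hkk|ekk].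
  - have [T1 T2] := triple (m:=m) x hij hjk hkk (fun v => ltac:(have := pf' v; have := pg' v;
      have := mx_disj v (neq_pair' (i:=i) hkk); have := mx_le1 i j v; mvsolve)) IH.
    by rewrite T1.
  - have [T1 T2] := triple (m:=m) x hij hjk' hkk (fun v => ltac:(have := pf' v; have := pg' v;
      have := mx_disj v (neq_pair' (i:=i) hkk); have := mx_le1 i j v; mvsolve)) IH.
    by rewrite T1.
  - have e : k = k' by apply: val_inj. by subst k'.
case: (eqVneq (i, j) (i', k')) => [e2|d2].
  case: e2 => ? ?; subst i' k'.
  have [T1 T2] := triple (m:=m) x hij' hjk' hjk (fun v => ltac:(have := pf' v; have := pg' v;
      have := mx_disj v (neq_pair (i:=i) hjk); have := mx_disj v (neq_pair (i:=i) hjk');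
      have := mx_disj v (neq_pair (i:=i) (ltn_trans hjk' hjk)); mvsolve)) IH.
  by rewrite T1 T2.
case: (eqVneq (i, k) (i', j')) => [e3|d3].
  case: e3 => ? ?; subst i' j'.
  have [T1 T2] := triple (m:=m) x hij hjk hjk' (fun v => ltac:(have := pf' v; have := pg' v;
      have := mx_disj v (neq_pair (i:=i) hjk); have := mx_disj v (neq_pair (i:=i) hjk');
      have := mx_disj v (neq_pair (i:=i) (ltn_trans hjk hjk')); mvsolve)) IH.
  by rewrite T1 T2.
case: (eqVneq (i, k) (i', k')) => [e4|d4].
  case: e4 => ? ?; subst i' k'.
  case: (ltngtP j j') => [hjj|hjj|ejj].
  - have [T1 T2] := triple (m:=m) x hij hjj hjk' (fun v => ltac:(have := pf' v; have := pg' v;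
      have := mx_disj v (neq_pair' (i:=i) hjj); have := mx_le1 i k v; mvsolve)) IH.
    by rewrite T2.
  - have [T1 T2] := triple (m:=m) x hij' hjj hjk (fun v => ltac:(have := pf' v; have := pg' v;
      have := mx_disj v (neq_pair' (i:=i) hjj); have := mx_le1 i k v; mvsolve)) IH.
    by rewrite T2.
  - have e : j = j' by apply: val_inj. by subst j'.
apply: disj => //; apply/mdvdP => v; rewrite /Lf /= !ffunE.
have := pf' v; have := pg' v.
have := mx_disj v (neq_pair (i:=i) hjk); have := mx_disj v (neq_pair (i:=i') hjk').
have := mx_disj v (elimN eqP d1); have := mx_disj v (elimN eqP d2).
have := mx_disj v (elimN eqP d3); have := mx_disj v (elimN eqP d4).
have := mx_disj v (elimN eqP d4).
rewrite !ffunE; genb; set t := m v; lia.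
Qed.

Lemma key (w : nat) : forall u (f : fork n) x, valid f -> (W (mmul u (Lf f)) < w)%N ->
  cN (mmul u (Lf f)) x = Rf f u x.
Proof.
elim: w => [|w IHw] u f x hf hw; first by rewrite ltn0 in hw.
have hif : isfork f (mmul u (Lf f)) by rewrite /isfork hf mdvd_mull.
case hp: [pick g | isfork g (mmul u (Lf f))] => [g|]; last first.
  by move: hp; case: pickP => // H _; move: (H f); rewrite hif.
have hg : isfork g (mmul u (Lf f)) by move: hp; case: pickP => // g' hg' [<-].
rewrite (cN_fork _ _ _ hp).
transitivity (Rf f (msub (mmul u (Lf f)) (Lf f)) x); last by rewrite mmulK.
symmetry; apply: agree => // u' f' x' hf' hw'; apply: IHw => //.
exact: leq_trans hw' hw.
Qed.

End Key.

Section Final.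
Variables (R : comPzRingType) (beta alpha : R) (n : nat).
Implicit Types (a b m u z x y : mono n) (p q : xpoly R n).

Local Notation cN := (cN beta alpha).
Local Notation Rf := (Rf beta alpha).
Local Notation N := (N beta alpha).

Lemma keyE u (f : fork n) x : valid f -> cN (mmul u (Lf f)) x = Rf f u x.
Proof. by move=> hf; apply: (key beta alpha x hf (ltnSn _)). Qed.

Definition Phi p x := \sum_(t <- p) t.1 * cN t.2 x.

Lemma Phi_cat p q x : Phi (p ++ q) x = Phi p x + Phi q x.
Proof. by rewrite /Phi big_cat. Qed.

Lemma Phi_coef p x (s : seq (mono n)) : uniq s -> {subset [seq t.2 | t <- p] <= s} ->
  Phi p x = \sum_(m <- s) coef p m * cN m x.
Proof.
move=> us; elim: p => [|t p IH] hsub.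
  by rewrite /Phi big_nil big1 // => m _; rewrite cf_nil mul0r.
have ht : t.2 \in s by apply: hsub; rewrite inE eqxx.
rewrite /Phi big_cons -/(Phi p x) IH; last by move=> y hy; apply: hsub; rewrite inE hy orbT.
under [RHS]eq_bigr => m _ do rewrite cf_cons mulrDl.
rewrite big_split /=; congr (_ + _).
rewrite (bigD1_seq t.2) //= eqxx mul1r big1 ?addr0 // => m hm.
by rewrite eq_sym (negbTE hm) mul0r mul0r.
Qed.

Lemma Phi_eq p q x : coef p =1 coef q -> Phi p x = Phi q x.
Proof.
move=> e; set s := undup [seq t.2 | t <- p ++ q].
have us : uniq s by apply: undup_uniq.
rewrite (Phi_coef x us) ?(Phi_coef x us).
  by apply: eq_bigr => m _; rewrite e.
all: by move=> y hy; rewrite mem_undup map_cat mem_cat hy ?orbT.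
Qed.

Lemma Phi_forkless p x : (forall t, t \in p -> forkless t.2) -> Phi p x = coef p x.
Proof.
elim: p => [|t p IH] h; first by rewrite /Phi big_nil cf_nil.
rewrite /Phi big_cons -/(Phi p x) IH; last by move=> t' ht'; apply: h; rewrite inE ht' orbT.
rewrite cf_cons cN_forkless; last by apply/pick_forkless/h; rewrite inE eqxx.
by rewrite mulrC.
Qed.

Lemma Phi_flatten (T : Type) (s : seq T) (G : T -> xpoly R n) x :
  Phi (flatten [seq G t | t <- s]) x = \sum_(t <- s) Phi (G t) x.
Proof.
elim: s => [|t s IH]; first by rewrite /Phi !big_nil.
by rewrite /= Phi_cat IH big_cons.
Qed.

Lemma Phi_gen (a : xpoly R n) (i j k : 'I_n) x : (i < j)%N -> (j < k)%N ->
  Phi (pmul a (gen beta alpha i j k)) x = 0.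
Proof.
move=> hij hjk; have hv : valid ((i, j), k) by rewrite /valid /= hij hjk.
elim: a => [|t a IH]; first by rewrite /Phi big_nil.
rewrite /pmul allpairs_cons -/(pmul a _) Phi_cat IH addr0.
rewrite /Phi /= !big_cons big_nil.
have := keyE t.2 x hv; rewrite /Rf /Lf /t1 /t2 /t3 /= mmul1 => ->.
ring.
Qed.

Lemma indep c : (forall t, t \in c -> forkless t.2) -> inJ beta alpha c ->
  forall m, coef c m = 0.
Proof.
move=> hc [s [hs e]] m.
rewrite -(Phi_forkless m hc) (Phi_eq m e) Phi_flatten big1_seq // => t /= ht.
case: t ht => [a [[i j] k]] ht; move/allP: hs => /(_ _ ht) /andP [/= hij hjk].
exact: Phi_gen.
Qed.


Local Notation inJ := (inJ beta alpha).

Lemma inJ_ext p q : coef p =1 coef q -> inJ q -> inJ p.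
Proof. by move=> e [s [hs h]]; exists s; split => // y; rewrite e h. Qed.

Lemma inJ_0 p : coef p =1 (fun=> 0) -> inJ p.
Proof. by move=> e; exists [::]; split => // y; rewrite e /= cf_nil. Qed.

Lemma inJ_cat p q : inJ p -> inJ q -> inJ (p ++ q).
Proof.
move=> [s1 [h1 e1]] [s2 [h2 e2]]; exists (s1 ++ s2); split; first by rewrite all_cat h1.
by move=> y; rewrite cf_cat e1 e2 map_cat flatten_cat cf_cat.
Qed.

Lemma cf_pmul_scale (c : R) (a q : xpoly R n) y :
  coef (pmul (scale c a) q) y = c * coef (pmul a q) y.
Proof.
elim: a => [|t a IH]; first by rewrite /pmul /= cf_nil mulr0.
have -> : scale c (t :: a) = (c * t.1, t.2) :: scale c a by [].
rewrite /pmul !allpairs_cons -/(pmul (scale c a) q) -/(pmul a q) !cf_cat IH mulrDr.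
congr (_ + _); rewrite !cf_sum !big_map big_distrr /=; apply: eq_bigr => b _; ring.
Qed.

Lemma inJ_scale (c : R) p : inJ p -> inJ (scale c p).
Proof.
move=> [s [hs e]]; exists [seq (scale c t.1, t.2) | t <- s]; split.
  by rewrite all_map; apply: sub_all hs => t.
move=> y; rewrite cf_scale e !cf_flatten big_map big_distrr /=.
by apply: eq_bigr => t _; rewrite cf_pmul_scale.
Qed.

Lemma inJ_flatten (T : eqType) (s : seq T) (G : T -> xpoly R n) :
  (forall t, t \in s -> inJ (G t)) -> inJ (flatten [seq G t | t <- s]).
Proof.
elim: s => [|t s IH] h; first by apply: inJ_0 => y; rewrite cf_nil.
rewrite /=; apply: inJ_cat; first by apply: h; rewrite inE eqxx.
by apply: IH => t' ht'; apply: h; rewrite inE ht' orbT.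
Qed.

Lemma inJ_base u (f : fork n) : valid f ->
  inJ ([:: (1, mmul u (Lf f))] ++ popp (rterms beta alpha f u)).
Proof.
case: f => [[i j] k] hv; exists [:: ([:: (-1, u)], ((i, j), k))]; split; first by rewrite /= andbT.
move=> y; rewrite /= /rterms /popp /Lf /t1 /t2 /t3 /= mmul1.
rewrite !cf_cons cf_nil /=; ring.
Qed.

Lemma span_aux (w : nat) : forall m, (W m < w)%N -> inJ ([:: (1, m)] ++ popp (N m)).
Proof.
elim: w => [|w IH] m hw; first by rewrite ltn0 in hw.
rewrite N_eq; case hp: [pick g | isfork g m] => [g|]; last first.
  by apply: inJ_0 => y; rewrite /popp /= !cf_cons cf_nil /=; ring.
have hg : isfork g m by move: hp; case: pickP => // g' hg' [<-].
have hm : m = mmul (msub m (Lf g)) (Lf g) by rewrite msubK //; case/andP: hg.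
set u := msub m (Lf g) in hm *.
apply: (inJ_ext (q := ([:: (1, mmul u (Lf g))] ++ popp (rterms beta alpha g u)) ++
   flatten [seq scale t.1 ([:: (1, t.2)] ++ popp (N t.2)) | t <- rterms beta alpha g u])).
  move=> y; rewrite -hm !cf_cat !cf_popp !cf_flatten.
  rewrite /rterms !big_cons big_nil /= !cf_scale ?cf_cat ?cf_popp ?cf_cons ?cf_nil /= ?cf_scale ?cf_popp; ring.
apply: inJ_cat; first by apply: inJ_base; case/andP: hg.
apply: inJ_flatten => t ht; apply: inJ_scale; apply: IH.
have := W_rterms hg ht; rewrite -/u => h; exact: leq_trans h hw.
Qed.

Lemma N_forkless_aux (w : nat) : forall m t, (W m < w)%N -> t \in N m -> forkless t.2.
Proof.
elim: w => [|w IH] m t hw; first by rewrite ltn0 in hw.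
rewrite N_eq; case hp: [pick g | isfork g m] => [g|]; last first.
  by rewrite inE => /eqP -> /=; apply/pick_forkless.
have hg : isfork g m by move: hp; case: pickP => // g' hg' [<-].
case/flatten_mapP => t0 ht0 /mapP [t' ht' ->] /=.
apply: (IH t0.2) ht'; have := W_rterms hg ht0 => h; exact: leq_trans h hw.
Qed.

Lemma span p : exists c : xpoly R n,
  (forall t, t \in c -> forkless t.2) /\ inJ (padd p (popp c)).
Proof.
exists (flatten [seq scale t.1 (N t.2) | t <- p]); split.
  move=> t /flatten_mapP [t0 _ /mapP [t' ht' ->]] /=.
  exact: (N_forkless_aux (ltnSn _) ht').
apply: (inJ_ext (q := flatten [seq scale t.1 ([:: (1, t.2)] ++ popp (N t.2)) | t <- p])).
  move=> y; rewrite /padd cf_cat cf_popp !cf_flatten cf_sum -sumrN -big_split /=.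
  by apply: eq_bigr => t _; rewrite ?cf_scale ?cf_cat ?cf_cons ?cf_nil ?cf_popp /= ?cf_scale ?cf_cat ?cf_cons ?cf_nil ?cf_popp; ring.
apply: inJ_flatten => t _; apply: inJ_scale; exact: (span_aux (ltnSn _)).
Qed.

End Final.
End Aux.
Import Aux.

Theorem proposition4p4 (R : comPzRingType) (beta alpha : R) (n : nat) (hn : (0 < n)%N) :
  (* spanning: every polynomial is congruent mod J to a combination of forkless monomials *)
  (forall p : xpoly R n, exists c : xpoly R n,
      (forall t, t \in c -> forkless t.2) /\ inJ beta alpha (padd p (popp c)))
  /\
  (* linear independence: a combination of forkless monomials lying in J is trivial *)
  (forall c : xpoly R n,
      (forall t, t \in c -> forkless t.2) -> inJ beta alpha c ->
      forall m : mono n, coef c m = 0).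
Proof.
split; [exact: span | exact: indep].
Qed.
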